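(* A graph $G$ is a blow-up of a linear forest if and only if $G$ contains none of $A$, $B$, $E$ as an induced subgraph and every induced cycle of $G$ has length four.
   Context: All graphs are finite, simple and loopless. A linear forest is a disjoint union of paths. A blow-up of a graph $H$ is any graph obtained from $H$ by repeatedly adding false twins, i.e., adding a new vertex non-adjacent to some existing vertex $v$ and having exactly the same neighbourhood as $v$ (equivalently, replacing vertices of $H$ by non-empty independent sets, with complete or empty bipartite connections according to adjacency in $H$). The graphs $A$, $B$, $E$ have vertex set $\{v_0,\dots,v_5\}$ and edge sets: $E(A)=\{v_0v_1,v_1v_2,v_2v_3,v_3v_4,v_4v_5,v_1v_4\}$; $E(B)=E(A)\cup\{v_0v_5\}$; $E(E)=\{v_0v_1,v_1v_2,v_0v_5,v_1v_4,v_2v_3\}$. *)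

(* Defs.v *)
From mathcomp Require Import all_boot.
Set Implicit Arguments. Unset Strict Implicit. Unset Printing Implicit Defensive.

Definition simple_graph (T : finType) (e : rel T) : Prop :=
  symmetric e /\ irreflexive e.

(* Concretely, the vertices are in bijection (via p) with the pairs (i, j),
   i < k, j < n i, where component i is the path 0 - 1 - ... - (n i - 1). *)
Definition linear_forest (T' : finType) (eH : rel T') : Prop :=
  exists (k : nat) (n : nat -> nat) (p : T' -> nat * nat),
    injective p /\
    (forall v, (p v).1 < k /\ (p v).2 < n (p v).1) /\
    (forall i j, i < k -> j < n i -> exists v, p v = (i, j)) /\
    (forall u v, eH u v =
       ((p u).1 == (p v).1) && (((p u).2 == (p v).2.+1) || ((p v).2 == (p u).2.+1))).

(* G is a blow-up of H: every vertex x of H is replaced by the nonempty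
   independent set f^-1(x), with complete/empty connections according to H. *)
Definition blowup_of (T : finType) (e : rel T) (T' : finType) (eH : rel T') : Prop :=
  exists f : T -> T', (forall y, exists x, f x = y) /\
                     (forall u v, e u v = eH (f u) (f v)).

Definition blowup_of_linear_forest (T : finType) (e : rel T) : Prop :=
  exists (T' : finType) (eH : rel T'),
    simple_graph eH /\ linear_forest eH /\ blowup_of e eH.

Definition edges_rel (l : seq (nat * nat)) : rel 'I_6 :=
  fun i j => ((nat_of_ord i, nat_of_ord j) \in l) || ((nat_of_ord j, nat_of_ord i) \in l).

Definition A_edges : seq (nat * nat) := [:: (0,1); (1,2); (2,3); (3,4); (4,5); (1,4)].
Definition B_edges : seq (nat * nat) := (0,5) :: A_edges.
Definition E_edges : seq (nat * nat) := [:: (0,1); (1,2); (0,5); (1,4); (2,3)].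

Definition graphA : rel 'I_6 := edges_rel A_edges.
Definition graphB : rel 'I_6 := edges_rel B_edges.
Definition graphE : rel 'I_6 := edges_rel E_edges.

Definition induced_sub (T' : finType) (eH : rel T') (T : finType) (e : rel T) : Prop :=
  exists phi : T' -> T, injective phi /\ forall a b, e (phi a) (phi b) = eH a b.

Definition cyc_adj (k : nat) (i j : 'I_k) : bool :=
  (nat_of_ord j == (nat_of_ord i).+1 %% k) || (nat_of_ord i == (nat_of_ord j).+1 %% k).

Definition induced_cycle (T : finType) (e : rel T) (k : nat) : Prop :=
  3 <= k /\ induced_sub (@cyc_adj k) e.

(* Main.v *)
Set Warnings "-notation-overridden".
Require Import Defs.
From mathcomp Require Import all_boot zify.
Set Implicit Arguments. Unset Strict Implicit. Unset Printing Implicit Defensive.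


Definition adjf (x y : nat * nat) : bool :=
  (x.1 == y.1) && ((x.2 == y.2.+1) || (y.2 == x.2.+1)).

Section Forward.
Variables (T : finType) (e : rel T) (g : T -> nat * nat).
Hypothesis Hg : forall u v, e u v = adjf (g u) (g v).

Lemma same_g a b w : g a = g b -> e a w = e b w.
Proof. by move=> E; rewrite !Hg E. Qed.

Lemma three_nbrs c a b d : e c a -> e c b -> e c d ->
  g a = g b \/ g b = g d \/ g a = g d.
Proof.
rewrite !Hg /adjf.
case: (g a) => a1 a2; case: (g b) => b1 b2; case: (g c) => c1 c2; case: (g d) => d1 d2 /=.
move=> H1 H2 H3.
have: (a1 = b1 /\ a2 = b2) \/ (b1 = d1 /\ b2 = d2) \/ (a1 = d1 /\ a2 = d2) by lia.
by case=> [[-> ->]|[[-> ->]|[-> ->]]]; auto.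
Qed.

Lemma no_pat6 (eH : rel 'I_6) (phi : 'I_6 -> T) :
  (forall i j, e (phi i) (phi j) = eH i j) ->
  forall (c a b d x y z : 'I_6),
  eH c a -> eH c b -> eH c d ->
  eH a x != eH b x -> eH b y != eH d y -> eH a z != eH d z -> False.
Proof.
move=> He c a b d x y z H1 H2 H3 N1 N2 N3.
rewrite -!He in H1 H2 H3 N1 N2 N3.
case: (three_nbrs H1 H2 H3) => [E|[E|E]].
- by move: N1; rewrite (same_g _ E) eqxx.
- by move: N2; rewrite (same_g _ E) eqxx.
- by move: N3; rewrite (same_g _ E) eqxx.
Qed.

Lemma mod2 x k : x < k.*2 -> (x %% k = x /\ x < k) \/ (x %% k = x - k /\ k <= x).
Proof.
move=> H; case: (ltnP x k) => Hk; first by left; rewrite modn_small.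
right; split=> //.
have -> : x = (x - k) + k by rewrite subnK.
by rewrite modnDr modn_small ?addnK //; lia.
Qed.

Lemma modSE x k : x < k -> x.+1 %% k = if x.+1 == k then 0 else x.+1.
Proof.
move=> H; case: eqP => [->|N]; first by rewrite modnn.
by rewrite modn_small //; rewrite ltn_neqAle H andbT; apply/eqP.
Qed.

Lemma modPE a k : a < k.+1 -> (a + k) %% k.+1 = if a == 0 then k else a.-1.
Proof.
case: a => [|a] H /=; first by rewrite add0n modn_small.
by rewrite addSn -addnS modnDr modn_small // ltnW.
Qed.

Lemma modS_m y k : (y %% k).+1 %% k = y.+1 %% k.
Proof. by rewrite -addn1 modnDml addn1. Qed.

Lemma modm3 m : (m.+2 == 3 %[mod m.+3]) = (m == 1).
Proof. by case: m => [|[|m]] //; rewrite !modn_small. Qed.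

Lemma no_cycle_fwd m (phi : 'I_m.+3 -> T) :
  (forall i j, e (phi i) (phi j) = cyc_adj i j) -> m = 1.
Proof.
move=> He.
have k0 : 0 < m.+3 by [].
case: (@arg_minnP _ ord0 xpredT (fun i : 'I_m.+3 => (g (phi i)).2) isT) => a _ amin.
pose b : 'I_m.+3 := Ordinal (ltn_pmod a.+1 k0).
pose c : 'I_m.+3 := Ordinal (ltn_pmod (a + m.+2) k0).
pose d : 'I_m.+3 := Ordinal (ltn_pmod b.+1 k0).
have aa : a < m.+3 by [].
have Hab : e (phi a) (phi b) by rewrite He /cyc_adj eqxx.
have Hbd : e (phi b) (phi d) by rewrite He /cyc_adj eqxx.
have Hac : e (phi a) (phi c).
  rewrite He /cyc_adj /=; apply/orP; right.
  apply/eqP; rewrite modPE // modSE.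
  1,2: clear -aa; repeat case: ifP; lia.
have ma := amin b isT; have mc := amin c isT.
have Ebc : g (phi b) = g (phi c).
  move: Hab Hac ma mc; rewrite !Hg /adjf.
  case: (g (phi a)) => a1 a2; case: (g (phi b)) => b1 b2; case: (g (phi c)) => c1 c2 /=.
  move=> H1 H2 H3 H4.
  have [-> ->] : b1 = c1 /\ b2 = c2 by lia.
  by [].
have := same_g (phi d) Ebc.
rewrite Hbd He /cyc_adj /= => /esym.
rewrite !modS_m -addnS -(addn3 a) -(addn2 a).
have F1 : (a + 2 == a + m.+3 %[mod m.+3]) = false by rewrite eqn_modDl modnn modn_small.
have F2 : (a + m.+2 == a + 3 %[mod m.+3]) = (m == 1).
  by rewrite eqn_modDl modm3.
rewrite F1 F2 /= => /eqP //.
Qed.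
End Forward.

Notation o6 k := (@Ordinal 6 k isT).

Lemma fwd (T : finType) (e : rel T) :
  blowup_of_linear_forest e ->
  (~ induced_sub graphA e /\ ~ induced_sub graphB e /\ ~ induced_sub graphE e /\
   forall k : nat, induced_cycle e k -> k = 4).
Proof.
move=> [T' [eH [Hs [[k [n [p [pinj [prange [psurj pform]]]]]] [f [fsurj fe]]]]]].
pose g u := p (f u).
have Hg : forall u v, e u v = adjf (g u) (g v) by move=> u v; rewrite fe pform.
split; [|split; [|split]].
- move=> [phi [_ Hphi]].
  by apply: (no_pat6 Hg Hphi (c:=o6 1) (a:=o6 0) (b:=o6 2) (d:=o6 4) (x:=o6 3) (y:=o6 5) (z:=o6 3)).
- move=> [phi [_ Hphi]].
  by apply: (no_pat6 Hg Hphi (c:=o6 1) (a:=o6 0) (b:=o6 2) (d:=o6 4) (x:=o6 3) (y:=o6 5) (z:=o6 3)).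
- move=> [phi [_ Hphi]].
  by apply: (no_pat6 Hg Hphi (c:=o6 1) (a:=o6 0) (b:=o6 2) (d:=o6 4) (x:=o6 5) (y:=o6 3) (z:=o6 5)).
- move=> k0 [k3 [phi [_ Hphi]]].
  case: k0 k3 phi Hphi => [|[|[|m]]] // _ phi Hphi.
  by rewrite (no_cycle_fwd Hg Hphi).
Qed.


Section Pat.
Variables (T : finType) (e : rel T).
Hypothesis esym : symmetric e.
Hypothesis eirr : irreflexive e.

Lemma mk_induced n (h : nat -> nat -> bool) (eH : rel 'I_n) (phi : 'I_n -> T) :
  (forall i j, eH i j = h i j) ->
  all (fun i => all (fun j => (i == j) || has (fun w => h i w != h j w) (iota 0 n)) (iota 0 n)) (iota 0 n) ->
  (forall i j, e (phi i) (phi j) = eH i j) ->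
  induced_sub eH e.
Proof.
move=> Hh TF H; exists phi; split=> // i j E.
have /allP/(_ i) := TF; rewrite mem_iota /= add0n ltn_ord => /(_ isT).
move=> /allP/(_ j); rewrite mem_iota /= add0n ltn_ord => /(_ isT).
case/orP=> [/eqP/val_inj //|/hasP [w]].
rewrite mem_iota add0n /= => wn.
have := H i (Ordinal wn); rewrite E H !Hh /= => ->.
by rewrite eqxx.
Qed.

Ltac solve_e := solve [ by rewrite eirr | done | by rewrite esym | by apply/negbTE | by rewrite esym; apply/negbTE ].

Lemma patA (x0 x1 x2 x3 x4 x5 : T) :
  e x0 x1 -> e x1 x2 -> e x2 x3 -> e x3 x4 -> e x4 x5 -> e x1 x4 ->
  ~~ e x0 x2 -> ~~ e x0 x3 -> ~~ e x0 x4 -> ~~ e x0 x5 -> ~~ e x1 x3 -> ~~ e x1 x5 ->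
  ~~ e x2 x4 -> ~~ e x2 x5 -> ~~ e x3 x5 -> induced_sub graphA e.
Proof.
move=> *.
apply: (@mk_induced 6 (fun a b => ((a,b) \in A_edges) || ((b,a) \in A_edges)) graphA (fun i => nth x0 [:: x0; x1; x2; x3; x4; x5] i)) => //.
move=> [[|[|[|[|[|[|i]]]]]] Hi] [[|[|[|[|[|[|j]]]]]] Hj] //=; solve_e.
Qed.

Lemma patB (x0 x1 x2 x3 x4 x5 : T) :
  e x0 x1 -> e x1 x2 -> e x2 x3 -> e x3 x4 -> e x4 x5 -> e x1 x4 -> e x0 x5 ->
  ~~ e x0 x2 -> ~~ e x0 x3 -> ~~ e x0 x4 -> ~~ e x1 x3 -> ~~ e x1 x5 ->
  ~~ e x2 x4 -> ~~ e x2 x5 -> ~~ e x3 x5 -> induced_sub graphB e.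
Proof.
move=> *.
apply: (@mk_induced 6 (fun a b => ((a,b) \in B_edges) || ((b,a) \in B_edges)) graphB (fun i => nth x0 [:: x0; x1; x2; x3; x4; x5] i)) => //.
move=> [[|[|[|[|[|[|i]]]]]] Hi] [[|[|[|[|[|[|j]]]]]] Hj] //=; solve_e.
Qed.

Lemma patE (x0 x1 x2 x3 x4 x5 : T) :
  e x0 x1 -> e x1 x2 -> e x0 x5 -> e x1 x4 -> e x2 x3 ->
  ~~ e x0 x2 -> ~~ e x0 x3 -> ~~ e x0 x4 -> ~~ e x1 x3 -> ~~ e x1 x5 ->
  ~~ e x2 x4 -> ~~ e x2 x5 -> ~~ e x3 x4 -> ~~ e x3 x5 -> ~~ e x4 x5 -> induced_sub graphE e.
Proof.
move=> *.
apply: (@mk_induced 6 (fun a b => ((a,b) \in E_edges) || ((b,a) \in E_edges)) graphE (fun i => nth x0 [:: x0; x1; x2; x3; x4; x5] i)) => //.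
move=> [[|[|[|[|[|[|i]]]]]] Hi] [[|[|[|[|[|[|j]]]]]] Hj] //=; solve_e.
Qed.

Lemma patC3 (x0 x1 x2 : T) : e x0 x1 -> e x1 x2 -> e x0 x2 -> induced_cycle e 3.
Proof.
move=> *; split=> //.
apply: (@mk_induced 3 (fun i j => (j == (i.+1) %% 3) || (i == (j.+1) %% 3)) (@cyc_adj 3) (fun i => nth x0 [:: x0; x1; x2] i)) => //.
move=> [[|[|[|i]]] Hi] [[|[|[|j]]] Hj] //=; solve_e.
Qed.

Lemma patC5 (x0 x1 x2 x3 x4 : T) :
  e x0 x1 -> e x1 x2 -> e x2 x3 -> e x3 x4 -> e x0 x4 ->
  ~~ e x0 x2 -> ~~ e x0 x3 -> ~~ e x1 x3 -> ~~ e x1 x4 -> ~~ e x2 x4 -> induced_cycle e 5.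
Proof.
move=> *; split=> //.
apply: (@mk_induced 5 (fun i j => (j == (i.+1) %% 5) || (i == (j.+1) %% 5)) (@cyc_adj 5) (fun i => nth x0 [:: x0; x1; x2; x3; x4] i)) => //.
move=> [[|[|[|[|[|i]]]]] Hi] [[|[|[|[|[|j]]]]] Hj] //=; solve_e.
Qed.
End Pat.


Section Local.
Variables (T : finType) (e : rel T).
Hypothesis esym : symmetric e.
Hypothesis eirr : irreflexive e.
Hypothesis nA : ~ induced_sub graphA e.
Hypothesis nB : ~ induced_sub graphB e.
Hypothesis nE : ~ induced_sub graphE e.
Hypothesis cyc : forall k, induced_cycle e k -> k = 4.

Definition tw (u v : T) := [forall w, e u w == e v w].

Lemma twP u v : tw u v -> forall w, e u w = e v w.
Proof. by move/forallP=> H w; apply/eqP. Qed.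

Lemma tw_refl u : tw u u.
Proof. by apply/forallP. Qed.

Lemma tw_sym u v : tw u v -> tw v u.
Proof. by move=> H; apply/forallP=> w; rewrite (twP H). Qed.

Lemma tw_trans u v w : tw u v -> tw v w -> tw u w.
Proof. by move=> H1 H2; apply/forallP=> z; rewrite (twP H1) (twP H2). Qed.

Lemma tw_nadj u v : tw u v -> e u v = false.
Proof. by move=> H; rewrite (twP H) eirr. Qed.

Lemma ntwP u v : ~~ tw u v -> exists w, e u w != e v w.
Proof. by move/forallPn. Qed.

Lemma no_tri a b c : e a b -> e b c -> e a c -> False.
Proof. by move=> H1 H2 H3; have := cyc (patC3 esym eirr H1 H2 H3). Qed.

Lemma ntri a b c : e a b -> e a c -> ~~ e b c.
Proof. by move=> H1 H2; apply/negP=> H3; apply: (no_tri H1 H3 H2). Qed.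

Lemma c4core a b c d x y :
  e a b -> e b c -> e c d -> e d a -> ~~ e a c -> ~~ e b d ->
  e a x -> ~~ e c x -> e b y -> ~~ e d y -> False.
Proof.
move=> ab bc cd da nac nbd ax ncx b_y ndy.
have ad : e a d by rewrite esym.
have dc : e d c by rewrite esym.
have cb : e c b by rewrite esym.
have ba : e b a by rewrite esym.
have nxb : ~~ e x b by rewrite esym; apply: ntri ab ax.
have nxd : ~~ e x d by rewrite esym; apply: ntri ad ax.
have nya : ~~ e a y by apply: ntri ba b_y.
have nyc : ~~ e c y by apply: ntri bc b_y.
case exy: (e x y).
- apply: nB; apply: (patB esym eirr (x0:=x) (x1:=a) (x2:=d) (x3:=c) (x4:=b) (x5:=y)) => //.
  + by rewrite esym.
  + by rewrite esym.
  + by rewrite esym.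
- apply: nA; apply: (patA esym eirr (x0:=x) (x1:=a) (x2:=d) (x3:=c) (x4:=b) (x5:=y)) => //.
  all: try by rewrite esym.
  all: try by rewrite exy.
  all: try by rewrite esym exy.
Qed.

Lemma c4core2 a b c d x :
  e a b -> e b c -> e c d -> e d a -> ~~ e a c -> ~~ e b d ->
  e a x -> ~~ e c x -> ~~ tw b d -> False.
Proof.
move=> ab bc cd da nac nbd ax ncx /ntwP [y].
case by_: (e b y); case dy: (e d y) => // _.
- by apply: (c4core ab bc cd da nac nbd ax ncx by_); rewrite dy.
- apply: (c4core (a:=a) (c:=c) (b:=d) (d:=b) (x:=x) (y:=y)) => //; try by rewrite esym.
  by rewrite by_.
Qed.

Lemma c4 a b c d :
  e a b -> e b c -> e c d -> e d a -> ~~ e a c -> ~~ e b d ->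
  tw a c || tw b d.
Proof.
move=> ab bc cd da nac nbd; apply/norP => -[/ntwP [x] H nbd'].
case ax: (e a x); case cx: (e c x); move: H; rewrite ax cx //= => _.
- by apply: (c4core2 ab bc cd da nac nbd ax _ nbd'); rewrite cx.
- apply: (c4core2 (a:=c) (b:=b) (c:=a) (d:=d) (x:=x)) => //; try by rewrite esym.
  by rewrite ax.
Qed.

Definition priv v a b c x := [&& e a x, ~~ e b x, ~~ e c x & ~~ e v x].

Lemma privC v a b c x : priv v a b c x = priv v a c b x.
Proof. by rewrite /priv; case: (e b x); case: (e c x). Qed.

Lemma priv1 v a b c w : e v a -> e v b -> e v c -> ~~ tw a c ->
  e a w -> ~~ e b w -> priv v a b c w.
Proof.
move=> va vb vc nac aw nbw.
have av : e a v by rewrite esym.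
have nvw : ~~ e v w by apply: ntri av aw.
rewrite /priv aw nbw nvw /= andbT.
apply/negP=> cw.
have nac' : ~~ e a c by apply: ntri va vc.
have wc : e w c by rewrite esym.
have cv : e c v by rewrite esym.
have := c4 va aw wc cv nvw nac'.
rewrite (negbTE nac) orbF => H.
by move: nbw; rewrite esym -(twP H) vb.
Qed.

Lemma Ecore v a b c x y : e v a -> e v b -> e v c ->
  priv v a b c x -> priv v b a c y -> False.
Proof.
move=> va vb vc /and4P [ax nbx ncx nvx] /and4P [b_y nay ncy nvy].
have nab : ~~ e a b by apply: ntri va vb.
have nac : ~~ e a c by apply: ntri va vc.
have nbc : ~~ e b c by apply: ntri vb vc.
case exy: (e x y).
- have yb : e y b by rewrite esym.
  have nxb : ~~ e x b by rewrite esym.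
  by have := cyc (patC5 esym eirr va ax exy yb vb nvx nvy nay nab nxb).
- apply: nE; apply: (patE esym eirr (x0:=a) (x1:=v) (x2:=b) (x3:=y) (x4:=c) (x5:=x)) => //;
  try by rewrite esym.
  all: try by rewrite esym exy.
  all: by rewrite exy.
Qed.

Lemma ntw_sym a b : ~~ tw a b -> ~~ tw b a.
Proof. by apply: contra; apply: tw_sym. Qed.

Lemma privpair v a b c : e v a -> e v b -> e v c ->
  ~~ tw a b -> ~~ tw a c -> ~~ tw b c ->
  exists x, priv v a b c x \/ priv v b a c x.
Proof.
move=> va vb vc nab nac nbc; case/ntwP: nab => w.
case aw: (e a w); case bw: (e b w) => //= _.
- by exists w; left; apply: priv1 => //; rewrite bw.
- by exists w; right; apply: priv1 => //; rewrite aw.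
Qed.

Lemma deg v a b c : e v a -> e v b -> e v c -> [|| tw a b, tw b c | tw a c].
Proof.
move=> va vb vc; apply: contraT => /norP [nab] /norP [nbc nac]; exfalso.
case: (privpair va vb vc nab nac nbc) => x [Px|Px].
- have := privpair vb vc va nbc (ntw_sym nab) (ntw_sym nac).
  case=> y [Py|Py].
  + by apply: (Ecore va vb vc Px (y:=y)); rewrite privC.
  + by apply: (Ecore va vc vb (x:=x) (y:=y)); rewrite privC.
- have := privpair va vc vb nac nab (ntw_sym nbc).
  case=> y [Py|Py].
  + by apply: (Ecore vb va vc Px (y:=y)); rewrite privC.
  + by apply: (Ecore vb vc va (x:=x) (y:=y)); rewrite privC.
Qed.

Definition isend r := [forall a, forall b, e r a ==> e r b ==> tw a b].

Lemma nonendP r : ~~ isend r -> exists a b, [/\ e r a, e r b & ~~ tw a b].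
Proof.
case/forallPn=> a /forallPn [b]; rewrite !negb_imply => /andP [ra /andP [rb nab]].
by exists a, b.
Qed.

Definition step p c := odflt c [pick y | e c y && ~~ tw p y].

Lemma step_ok p c : ~~ isend c -> e c (step p c) && ~~ tw p (step p c).
Proof.
case/nonendP=> a [b [ca cb nab]]; rewrite /step.
case: pickP => [y //|H].
have := H a; have := H b; rewrite /= ca cb /= => /negbFE pb /negbFE pa.
by move: nab; rewrite (tw_trans (tw_sym pa) pb).
Qed.

Section Walk.
Variables (u p0 : T).
Hypothesis up0 : e u p0.
Hypothesis noend : forall r, connect e u r -> ~~ isend r.

Fixpoint wp n : T * T :=
  if n is n'.+1 then let: (a, b) := wp n' in (b, step a b) else (p0, u).

Definition w n := (wp n).1.

Lemma wp2 n : (wp n).2 = w n.+1.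
Proof. by rewrite /w /=; case: (wp n). Qed.

Lemma wSS n : w n.+2 = step (w n) (w n.+1).
Proof. by rewrite /w /=; case: (wp n) => a b /=. Qed.

Lemma walk1 n : connect e u (w n.+1) /\ e (w n) (w n.+1).
Proof.
elim: n => [|n [IH1 IH2]].
  by split; rewrite /w /= ?connect0 // esym.
have := step_ok (w n) (noend IH1); rewrite -wSS => /andP [H1 _].
split=> //; apply: connect_trans IH1 _; exact: connect1.
Qed.

Lemma walk_e n : e (w n) (w n.+1).
Proof. by case: (walk1 n). Qed.

Lemma walk_nt n : ~~ tw (w n) (w n.+2).
Proof.
have := step_ok (w n) (noend (proj1 (walk1 n))); rewrite -wSS.
by case/andP.
Qed.

End Walk.

Section CycContra.
Variables (w : nat -> T) (I J : nat).
Hypothesis IJ : I < J.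
Hypothesis twIJ : tw (w I) (w J).
Hypothesis dist : forall x y, x < y -> y < J -> ~~ tw (w x) (w y).
Hypothesis we : forall n, e (w n) (w n.+1).
Hypothesis wnt : forall n, ~~ tw (w n) (w n.+2).

Lemma adjw x y : I <= x -> x < y -> y < J ->
  e (w x) (w y) = (y == x.+1) || ((x == I) && (y == J.-1)).
Proof.
move=> Ix xy yJ.
case: (eqVneq y x.+1) => [->|ny]; first by rewrite we.
case: (boolP ((x == I) && (y == J.-1))) => [/andP[/eqP-> /eqP->]|nc] /=.
  have := we J.-1; rewrite prednK; last by lia.
  by rewrite (twP twIJ) esym.
apply/negbTE/negP => exy.
have y1 : y.-1.+1 = y by lia.
have e1 : e (w y) (w y.-1) by rewrite esym -{2}y1 we.
have e3 : e (w y) (w x) by rewrite esym.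
case/or3P: (deg e1 (we y) e3).
- by move=> H; have := wnt y.-1; rewrite y1 H.
- move=> H.
  case: (ltngtP y.+1 J) => [yJ'||yJ'].
  + have xy1 : x < y.+1 by lia.
    by move: (dist xy1 yJ'); rewrite (tw_sym H).
  + by lia.
  + rewrite yJ' in H.
    have H2 := tw_trans twIJ H.
    case: (eqVneq x I) => [xI|xI].
    * by move: nc; rewrite xI eqxx /= -yJ' /= eqxx.
    * have h1 : I < x by lia.
      have h2 : x < J by lia.
      by move: (dist h1 h2); rewrite H2.
- move=> H.
  have h1 : x < y.-1 by lia.
  have h2 : y.-1 < J by lia.
  by move: (dist h1 h2); rewrite (tw_sym H).
Qed.

Lemma cyc_contra : False.
Proof.
have J1 : J != I.+1.
  apply/eqP=> E; have := we I; rewrite -E.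
  by rewrite (tw_nadj twIJ).
have J2 : J != I.+2.
  by apply/eqP=> E; have := wnt I; rewrite -E twIJ.
case: (eqVneq J (I + 4)) => [J4|J4].
- have h01 := we I; have h12 := we I.+1; have h23 := we I.+2.
  have h30 : e (w I.+3) (w I).
    rewrite esym adjw; [|by []|lia|lia].
    by rewrite J4 addn4 /= !eqxx orbT.
  have n02 : ~~ e (w I) (w I.+2) by rewrite adjw //; lia.
  have n13 : ~~ e (w I.+1) (w I.+3) by rewrite adjw //; lia.
  case/orP: (c4 h01 h12 h23 h30 n02 n13) => H.
  + have h1 : I < I.+2 by [].
    have h2 : I.+2 < J by lia.
    by move: (dist h1 h2); rewrite H.
  + have h1 : I.+1 < I.+3 by [].
    have h2 : I.+3 < J by lia.
    by move: (dist h1 h2); rewrite H.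
- have k3 : 3 <= J - I by lia.
  have : J - I = 4.
    apply: cyc; split=> //.
    exists (fun t : 'I_(J - I) => w (I + t)); split.
    + move=> s t E; apply: val_inj => /=.
      case: (ltngtP s t) => // st.
      * have h1 : I + s < I + t by lia.
        have h2 : I + t < J by have := ltn_ord t; lia.
        by move: (dist h1 h2); rewrite E tw_refl.
      * have h1 : I + t < I + s by lia.
        have h2 : I + s < J by have := ltn_ord s; lia.
        by move: (dist h1 h2); rewrite E tw_refl.
    + have key : forall s t : 'I_(J - I), s < t ->
          e (w (I + s)) (w (I + t)) = cyc_adj s t.
        move=> s t st; rewrite adjw; [|lia|lia|have := ltn_ord t; lia].
        have ss : s < J - I by [].
        have ts : t < J - I by [].
        rewrite /cyc_adj !modSE //.
        move: st ss ts; clear; move: (nat_of_ord s) (nat_of_ord t) => a b.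
        repeat case: ifP => ?; move=> *; apply/idP/idP; lia.
      move=> s t; case: (ltngtP s t) => st.
      * exact: key.
      * by rewrite esym key // /cyc_adj orbC.
      * have -> : t = s by apply: val_inj.
        rewrite eirr /cyc_adj modSE //.
        move: (ltn_ord s) k3; clear; move: (nat_of_ord s) => a.
        by case: ifP => ?; symmetry; apply/negbTE; lia.
  by move/eqP; rewrite -(eqn_add2l I) subnKC ?(ltnW IJ) // (negbTE J4).
Qed.
End CycContra.

Lemma end_exists u : exists r, isend r && connect e u r.
Proof.
apply/existsP; apply: contraT => /existsPn H.
have noend : forall r, connect e u r -> ~~ isend r.
  by move=> r ur; move: (H r); rewrite ur andbT.
case/nonendP: (noend u (connect0 _ _)) => p0 [b [up0 _ _]].
pose W := w u p0.
have nI : ~~ injectiveb (fun i : 'I_#|T|.+1 => W i).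
  apply/negP => /injectiveP Hi.
  by have := leq_card _ Hi; rewrite card_ord ltnn.
case/injectivePn: nI => i [j] nij Eij.
pose P n := [exists i : 'I_n, tw (W i) (W n)].
have exP : exists n, P n.
  case: (ltngtP i j) => ij.
  - by exists j; apply/existsP; exists (Ordinal ij); rewrite /= Eij tw_refl.
  - by exists i; apply/existsP; exists (Ordinal ij); rewrite /= Eij tw_refl.
  - by move: nij; rewrite (val_inj ij) eqxx.
case: (ex_minnP exP) => J /existsP [I twIJ] minJ.
suff : False by [].
apply: (@cyc_contra W I J (ltn_ord I) twIJ).
- move=> x y xy yJ; apply/negP => Hxy.
  have : P y by apply/existsP; exists (Ordinal xy).
  by move/minJ; rewrite leqNgt yJ.
- exact: walk_e noend.
- exact: walk_nt noend.
Qed.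

Section Level.
Variable r : T.
Hypothesis endr : isend r.

Definition Fr (S : {set T}) : {set T} :=
  [set x | tw x r] :|: S :|: [set x | [exists y in S, e y x]].

Lemma Fr_mono : {homo Fr : X Y / X \subset Y}.
Proof.
move=> X Y XY; apply/subsetP=> x; rewrite !inE.
case/orP => [/orP [H|H]|/existsP [y /andP [yX yx]]].
- by rewrite H.
- by rewrite (subsetP XY _ H) orbT.
- by apply/orP; right; apply/existsP; exists y; rewrite (subsetP XY _ yX).
Qed.

Notation Ik k := (iter k Fr set0).
Definition lev x := fix_order Fr x.

Lemma inI k x : (x \in Ik k.+1) =
  [|| tw x r, x \in Ik k | [exists y in Ik k, e y x]].
Proof. by rewrite /= !inE orbA. Qed.

Lemma Isub k l : k <= l -> Ik k \subset Ik l.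
Proof. exact: (subset_iter Fr_mono). Qed.

Lemma twI k x y : x \in Ik k -> tw y x -> y \in Ik k.
Proof.
elim: k x y => [|k IH] x y; first by rewrite inE.
rewrite !inI => /or3P [xr|xI|/existsP [z /andP [zI zx]]] yx.
- by rewrite (tw_trans yx xr).
- by rewrite (IH x y xI yx) orbT.
- apply/orP; right; apply/orP; right; apply/existsP; exists z.
  by rewrite zI /= esym (twP yx) esym.
Qed.

Lemma I1 x : x \in Ik 1 -> tw x r.
Proof. by rewrite inI /= in_set0 => /orP [//|/existsP [y]]; rewrite in_set0. Qed.

Lemma layer k a : a \in Ik k.+2 -> a \notin Ik k.+1 ->
  exists y, [/\ y \in Ik k.+1, y \notin Ik k & e y a].
Proof.
rewrite inI => /or3P [ar|aI|/existsP [y /andP [yI ya]]] naI.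
- have : a \in Ik 1 by rewrite inI ar.
  by move/(subsetP (Isub (_ : 1 <= k.+1))) => H; move: naI; rewrite H.
- by move: naI; rewrite aI.
- exists y; split=> //; apply/negP => yI'.
  by move: naI; rewrite inI; case/negP; apply/orP; right; apply/orP; right; apply/existsP; exists y; rewrite yI'.
Qed.

Lemma Klev k a b : a \in Ik k.+1 -> a \notin Ik k ->
  b \in Ik k.+1 -> b \notin Ik k -> tw a b.
Proof.
elim: k a b => [|k IH] a b.
  move=> /I1 ar _ /I1 br _.
  exact: tw_trans ar (tw_sym br).
move=> aI naI bI nbI.
case: (layer aI naI) => y [yI nyI ya].
case: (layer bI nbI) => y' [y'I ny'I y'b].
case: k IH aI naI bI nbI yI nyI y'I ny'I => [|k] IH aI naI bI nbI yI nyI y'I ny'I.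
- move: yI y'I => /I1 yr /I1 y'r.
  have ra : e r a by rewrite -(twP yr).
  have rb : e r b by rewrite -(twP y'r).
  by move/forallP: endr => /(_ a) /forallP /(_ b); rewrite ra rb.
- have yy' := IH y y' yI nyI y'I ny'I.
  have yb : e y b by rewrite (twP yy').
  case: (layer yI nyI) => z [zI nzI zy].
  have yz : e y z by rewrite esym.
  case/or3P: (deg yz ya yb) => // H.
  + have : a \in Ik k.+1 by apply: twI zI (tw_sym H).
    move/(subsetP (Isub (leqnSn _))) => H'; by move: naI; rewrite H'.
  + have : b \in Ik k.+1 by apply: twI zI (tw_sym H).
    move/(subsetP (Isub (leqnSn _))) => H'; by move: nbI; rewrite H'.
Qed.


Lemma inIlev x k : (x \in Ik k) = (0 < lev x <= k).
Proof. exact: (in_iter_fixE Fr_mono). Qed.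

Lemma fix_step x y : x \in fixset Fr -> e x y -> y \in fixset Fr.
Proof.
move=> xF xy; rewrite -(fixsetK Fr_mono) !inE.
by apply/orP; right; apply/existsP; exists x; rewrite xF.
Qed.

Lemma fix_conn x : connect e r x -> x \in fixset Fr.
Proof.
have rF : r \in fixset Fr by rewrite -(fixsetK Fr_mono) !inE tw_refl.
case/connectP=> p; elim: p r rF => [|y p IH] z zF /=; first by move=> _ ->.
case/andP=> zy pp xl; apply: IH pp xl; exact: fix_step zF zy.
Qed.

Lemma lev_pos x : x \in fixset Fr -> 0 < lev x.
Proof. by rewrite -(@fix_order_gt0 _ Fr). Qed.

Lemma adj_lev x y : x \in fixset Fr -> y \in fixset Fr ->
  e x y = (lev y == (lev x).+1) || (lev x == (lev y).+1).
Proof.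
move=> xF yF; have px := lev_pos xF; have py := lev_pos yF.
have xI : x \in Ik (lev x) by rewrite inIlev px leqnn.
have yI : y \in Ik (lev y) by rewrite inIlev py leqnn.
apply/idP/idP => [xy|].
- have h1 : y \in Ik (lev x).+1.
    by rewrite inI; apply/orP; right; apply/orP; right; apply/existsP; exists x; rewrite xI.
  have h2 : x \in Ik (lev y).+1.
    by rewrite inI; apply/orP; right; apply/orP; right; apply/existsP; exists y; rewrite yI esym.
  rewrite inIlev in h1; rewrite inIlev in h2.
  case: (eqVneq (lev x) (lev y)) => E.
  + have H : tw x y by apply: (@Klev (lev x).-1); rewrite !inIlev; lia.
    by move: xy; rewrite (tw_nadj H).
  + apply/orP; lia.
- wlog: x y xF yF px py xI yI / lev y == (lev x).+1.
    move=> W /orP [H|H]; first by apply: W => //; rewrite H.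
    by rewrite esym; apply: W => //; rewrite H ?orbT.
  move=> /eqP E _.
  have : y \in Ik (lev x).-1.+2 by rewrite prednK // -E.
  have nyI : y \notin Ik (lev x).-1.+1 by rewrite prednK // inIlev E ltnn andbF.
  move=> yI2; case: (layer yI2 nyI) => z [zI nzI zy].
  have H : tw z x by apply: (@Klev (lev x).-1) => //; rewrite !inIlev; lia.
  by rewrite -(twP H).
Qed.

Lemma lev_eq x k : x \in fixset Fr -> (lev x == k.+1) = (x \in Ik k.+1) && (x \notin Ik k).
Proof.
move=> xF; have := lev_pos xF; rewrite !inIlev => px.
apply/idP/idP; lia.
Qed.

Lemma contig d j x : x \in fixset Fr -> 0 < j -> lev x = j + d ->
  exists z, connect e x z /\ lev z = j.
Proof.
elim: d x => [|d IH] x xF j0 E; first by exists x; rewrite connect0 E addn0.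
have h1 : x \in Ik (j + d).-1.+2 by rewrite inIlev; lia.
have h2 : x \notin Ik (j + d).-1.+1 by rewrite inIlev; lia.
case: (layer h1 h2) => z [zI nzI zx].
have zF : z \in fixset Fr := subsetP (iter_sub_fix Fr_mono _) z zI.
have zl : lev z = j + d.
  have := zI; rewrite inIlev => H1; move: nzI; rewrite inIlev; lia.
case: (IH z zF j0 zl) => w [zw wl].
exists w; split=> //; apply: connect_trans zw.
by apply: connect1; rewrite esym.
Qed.
End Level.

Definition Rof u := odflt u [pick r | isend r && connect e u r].

Lemma Rof_spec u : isend (Rof u) && connect e u (Rof u).
Proof.
rewrite /Rof; case: pickP => [r //|H].
by case: (end_exists u) => r Hr; move: (H r); rewrite Hr.
Qed.

Lemma csym : connect_sym e.
Proof. exact: sym_connect_sym esym. Qed.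

Lemma Rof_eq u v : connect e u v -> Rof u = Rof v.
Proof.
move=> uv.
have Ep : [pick r | isend r && connect e u r] = [pick r | isend r && connect e v r].
  apply: eq_pick => r /=; congr andb; apply/idP/idP => H.
  - by apply: connect_trans H; rewrite csym.
  - exact: connect_trans uv H.
rewrite /Rof Ep; case: pickP => // H.
by case: (end_exists v) => r Hr; move: (H r); rewrite Hr.
Qed.

Definition comp u : nat := enum_rank (Rof u).
Definition pos u : nat := (lev (Rof u) u).-1.
Definition gg u := (comp u, pos u).

Lemma RF u : u \in fixset (Fr (Rof u)).
Proof. by apply: fix_conn; case/andP: (Rof_spec u) => _; rewrite csym. Qed.

Lemma formula u v : e u v = adjf (gg u) (gg v).
Proof.
case: (eqVneq (Rof u) (Rof v)) => E.
- have uF := RF u; have vF := RF v; rewrite -E in vF.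
  case/andP: (Rof_spec u) => eR _.
  have pu := lev_pos uF; have pv := lev_pos vF.
  rewrite (adj_lev eR uF vF) /adjf /gg /comp /pos /= -E eqxx /=.
  apply/idP/idP; lia.
- have -> : e u v = false.
    apply/negbTE/negP => uv; move: E; rewrite (Rof_eq (connect1 uv)).
    by rewrite eqxx.
  rewrite /adjf /gg /comp /=.
  by rewrite (inj_eq val_inj) (inj_eq enum_rank_inj) (negbTE E).
Qed.

Lemma bwd_main : blowup_of_linear_forest e.
Proof.
pose s := map gg (enum T).
pose T' := seq_sub s.
pose f (u : T) : T' := SeqSub (map_f gg (mem_enum T u)).
pose eH (a b : T') := adjf (ssval a) (ssval b).
have gP : forall y : T', exists u, ssval y = gg u.
  by move=> y; case/mapP: (ssvalP y) => u _ ->; exists u.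
exists T', eH; split; [|split].
- split.
  + by move=> a b; rewrite /eH /adjf eq_sym orbC.
  + move=> [[x1 x2] Hx]; rewrite /eH /adjf /=; apply/negbTE; lia.
- pose n i := \max_(u | comp u == i) (pos u).+1.
  exists #|T|, n, (fun a : T' => ssval a); split; [|split; [|split]].
  + by move=> a b /val_inj.
  + move=> v; case: (gP v) => u ->; split; first exact: ltn_ord.
    by apply: (@leq_bigmax_cond _ (fun w => comp w == comp u) (fun w => (pos w).+1) u).
  + move=> i j ik jn.
    case: (boolP [exists u, (comp u == i) && (j < (pos u).+1)]) => [/existsP [u /andP [ui ju]]|/existsPn H]; last first.
      have : n i <= j.
        by apply/bigmax_leqP => u ui; move: (H u); rewrite ui /= -leqNgt.
      by rewrite leqNgt jn.
    have uF := RF u; case/andP: (Rof_spec u) => eR _.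
    have pu := lev_pos uF.
    have Hl : lev (Rof u) u = j.+1 + (pos u - j) by rewrite /pos in ju *; lia.
    case: (contig eR uF (ltn0Sn j) Hl) => z [uz zl].
    exists (f z) => /=.
    rewrite /gg /comp /pos -(Rof_eq uz) zl /=.
    by move/eqP: ui => <-.
  + by [].
- exists f; split.
  + move=> y; case: (gP y) => u Hu; exists u; apply: val_inj => /=; by rewrite Hu.
  + by move=> u v; rewrite /eH /= formula.
Qed.

End Local.

Theorem corollary2p7 (T : finType) (e : rel T) (He : simple_graph e) :
  blowup_of_linear_forest e <->
  (~ induced_sub graphA e /\ ~ induced_sub graphB e /\ ~ induced_sub graphE e /\
   forall k : nat, induced_cycle e k -> k = 4).
Proof.
split; first exact: fwd.
move=> [nA [nB [nE cyc]]]; case: He => esym eirr.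
exact: (bwd_main esym eirr nA nB nE cyc).
Qed.
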